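(* Let $G$ be a countably infinite group and $C<G$ a finite cyclic subgroup of prime order, with normalizer $N(C)=\{g\in G: gCg^{-1}=C\}$. Let $(K,\kappa)$ be a nontrivial standard probability space. If $G/N(C)$ is infinite, then the action $G\curvearrowright (K^{G/C},\kappa^{G/C})$ is essentially free.
   Context: $(K^{G/C},\kappa^{G/C})$ is the product space of maps $x:G/C\to K$ with product measure, and $G$ acts by $(gx)(fC)=x(g^{-1}fC)$ (the generalized Bernoulli shift over $G/C$). Nontrivial means $\kappa$ is not concentrated on a single point. Essentially free means that for every $g\ne e$, the set $\{x: gx=x\}$ has measure zero. *)

(* Defs.v *)
From HB Require Import structures.
From mathcomp Require Import all_boot all_order all_algebra.
From mathcomp Require Import all_classical all_reals all_analysis.

Set Implicit Arguments.
Unset Strict Implicit.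
Unset Printing Implicit Defensive.

Import Order.TTheory GRing.Theory Num.Theory.
Local Open Scope classical_set_scope.

Definition lcoset (G : groupType) (g : G) (A : set G) : set G :=
  [set (g * a)%g | a in A].

Definition conjset (G : groupType) (g : G) (A : set G) : set G :=
  [set (g * a * g^-1)%g | a in A].

Definition is_subgroup (G : groupType) (H : set G) : Prop :=
  [/\ H 1%g, (forall x y, H x -> H y -> H (x * y)%g) & (forall x, H x -> H (x^-1)%g)].

Definition normalizer (G : groupType) (C : set G) : set G :=
  [set g | conjset g C = C].

Definition left_cosets (G : groupType) (H : set G) : set (set G) :=
  [set A | exists g, A = lcoset g H].

Definition coset_space (G : groupType) (H : set G) : Type :=
  {A : set G | left_cosets H A}.

Lemma lcoset_left_cosets (G : groupType) (H : set G) (g : G) (A : set G) :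
  left_cosets H A -> left_cosets H (lcoset g A).
Proof.
move=> [f ->]; exists (g * f)%g; rewrite /lcoset; apply/seteqP; split.
- by move=> _ [_ [h Hh <-] <-]; exists h => //; rewrite mulgA.
- by move=> _ [h Hh <-]; exists (f * h)%g; [exists h | rewrite mulgA].
Qed.

Definition coset_shift (G : groupType) (H : set G) (g : G) (a : coset_space H) :
  coset_space H :=
  exist _ (lcoset g (proj1_sig a)) (lcoset_left_cosets g (proj2_sig a)).

Definition bshift (G : groupType) (H : set G) (K : Type) (g : G)
    (x : coset_space H -> K) : coset_space H -> K :=
  fun a => x (coset_shift (g^-1)%g a).

Definition cylinders (I : Type) d (K : measurableType d) : set (set (I -> K)) :=
  [set S | exists (i : I) (A : set K), measurable A /\ S = [set x | A (x i)]].

Arguments cylinders I {d} K.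

Definition prod_space (I : Type) d (K : measurableType d) :=
  g_sigma_algebraType (cylinders I K).
Arguments prod_space I {d} K.

(** [P] is the product measure kappa^I : it gives every finite-dimensional
    measurable rectangle the product of the kappa-measures of its sides
    (this determines P uniquely on the product sigma-algebra). *)
Definition is_product_measure (R : realType) (I : Type) d (K : measurableType d)
    (kappa : probability K R) (P : probability (prod_space I K) R) : Prop :=
  forall (n : nat) (j : 'I_n -> I) (A : 'I_n -> set K),
    injective j -> (forall k, measurable (A k)) ->
    P [set x | forall k, A k (x (j k))] = (\prod_(k < n) kappa (A k))%E.

(** K is standard Borel: Borel-isomorphic to a Borel subset of the reals
    (Kuratowski's characterization of standard Borel spaces). *)
Definition standard_borel (R : realType) d (K : measurableType d) : Prop :=
  exists (B : set R) (f : K -> R) (h : R -> K),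
    [/\ measurable B, measurable_fun setT f, measurable_fun B h &
        [/\ (forall x, B (f x)), (forall x, h (f x) = x) &
             (forall y, B y -> f (h y) = y)]].

Definition nontrivial_prob (R : realType) d (K : measurableType d)
    (kappa : probability K R) : Prop :=
  ~ (exists k : K, kappa [set k] = 1%E).

(* Main.v *)
Require Import Defs.
From HB Require Import structures.
From mathcomp Require Import all_boot all_order all_algebra.
From mathcomp Require Import all_classical all_reals all_analysis.
From mathcomp Require Import ring lra.
Set Implicit Arguments.
Unset Strict Implicit.
Unset Printing Implicit Defensive.
Import Order.TTheory GRing.Theory Num.Theory.
Local Open Scope classical_set_scope.


Section GroupPart.
Variable G : groupType.
Local Open Scope group_scope.

Lemma expg_mod (c : G) m n : c ^+ m = 1 -> c ^+ n = c ^+ (n %% m).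
Proof.
move=> cm; by rewrite {1}(divn_eq n m) expgnDr mulnC expgnA cm expg1n mul1g.
Qed.

Lemma expg_diff (c : G) i j : (i <= j)%N -> c ^+ i = c ^+ j -> c ^+ (j - i) = 1.
Proof.
move=> ij e; apply: (@mulgI _ (c ^+ i)); rewrite mulg1 -expgnDr subnKC //.
Qed.

Lemma order_exists (c0 : G) p : ([set c0 ^+ n | n in [set: nat]] #= `I_p)%card ->
  exists m, (0 < m)%N /\ c0 ^+ m = 1.
Proof.
move=> Cp.
have [[i [j [ij eq]]]|noinj] := pselect (exists i j, (i < j <= p)%N /\ c0 ^+ i = c0 ^+ j).
  exists (j - i); split; first by rewrite subn_gt0; case/andP: ij.
  by apply: expg_diff => //; case/andP: ij => /ltnW.
exfalso.
have inj : {in `I_p.+1 &, injective (fun n => c0 ^+ n)}.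
  move=> i j; rewrite !inE /= => ip jp e.
  apply/eqP; rewrite eqn_leq; apply/negP => /negP; rewrite negb_and -!ltnNge.
  case/orP => h; apply: noinj.
    by exists j, i; split => //; rewrite h /=; rewrite -ltnS.
  by exists i, j; split => //; rewrite h /=; rewrite -ltnS.
have := inj_card_eq inj.
rewrite card_eq_le => /andP[_ le1].
have sub : (fun n => c0 ^+ n) @` `I_p.+1 `<=` [set c0 ^+ n | n in [set: nat]].
  by move=> _ [n _ <-]; exists n.
have := card_le_trans le1 (subset_card_le sub).
rewrite (card_le_eqr Cp) card_le_II ltnn //.
Qed.

Lemma expg_card (c0 : G) p : ([set c0 ^+ n | n in [set: nat]] #= `I_p)%card ->
  c0 ^+ p = 1.
Proof.
move=> Cp.
have ex : exists m, (0 < m)%N && (c0 ^+ m == 1).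
  by have [m [m0 cm]] := order_exists Cp; exists m; rewrite m0 cm eqxx.
case: (ex_minnP ex) => m /andP[m0 /eqP cm] minm.
have eqC : [set c0 ^+ n | n in [set: nat]] = (fun n => c0 ^+ n) @` `I_m.
  apply/seteqP; split => _ [n _ <-].
    by exists (n %% m); [rewrite /= ltn_mod| rewrite -expg_mod].
  by exists n.
have inj : {in `I_m &, injective (fun n => c0 ^+ n)}.
  move=> i j; rewrite !inE /= => im jm e.
  wlog ij : i j im jm e / (i <= j)%N.
    by move=> W; case: (leqP i j) => h; [|apply/esym]; apply: W => //; apply: ltnW.
  have := expg_diff ij e; move: ij; rewrite leq_eqVlt => /orP[/eqP //|ij dj].
  have := minm (j - i); rewrite subn_gt0 ij dj eqxx => /(_ isT).
  rewrite leqNgt => /negP; case.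
  by apply: leq_ltn_trans jm; apply: leq_subr.
have := inj_card_eq inj; rewrite -eqC (card_eql Cp) => /card_eq_II ->.
by [].
Qed.

Lemma gen_nonid (c0 c : G) p : prime p -> c0 ^+ p = 1 ->
  [set c0 ^+ n | n in [set: nat]] c -> c <> 1 ->
  [set c0 ^+ n | n in [set: nat]] = [set c ^+ n | n in [set: nat]].
Proof.
move=> pp c0p [k _ ck] c1.
have k0 : (0 < k)%N.
  by rewrite lt0n; apply/negP => /eqP k0; apply: c1; rewrite -ck k0.
have ndvd : ~~ (p %| k).
  apply/negP => /dvdnP[q kq]; apply: c1.
  by rewrite -ck kq mulnC expgnA c0p expg1n.
have cop : coprime k p by rewrite coprime_sym prime_coprime.
case: (egcdnP p k0) => km kn e _.
move: e; rewrite (eqP cop) => e.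
have c0c : c ^+ km = c0 by rewrite -ck -expgnA mulnC e expgnDr (mulnC kn) expgnA c0p expg1n mul1g.
apply/seteqP; split => _ [n _ <-].
  by exists (km * n)%N => //; rewrite expgnA c0c.
by exists (k * n)%N => //; rewrite expgnA ck.
Qed.

Lemma lcosetM (a b : G) X : lcoset (a * b) X = lcoset a (lcoset b X).
Proof.
apply/seteqP; split.
  by move=> _ [x Xx <-]; exists (b * x); [exists x|rewrite mulgA].
by move=> _ [_ [x Xx <-] <-]; exists x => //; rewrite mulgA.
Qed.

Lemma lcoset1 X : lcoset (1 : G) X = X.
Proof.
apply/seteqP; split; first by move=> _ [x Xx <-]; rewrite mul1g.
by move=> x Xx; exists x => //; rewrite mul1g.
Qed.

Lemma conjsetM (a b : G) X : conjset (a * b) X = conjset a (conjset b X).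
Proof.
apply/seteqP; split.
  move=> _ [x Xx <-]; exists (b * x * b^-1); first by exists x.
  by rewrite invgM !mulgA.
move=> _ [_ [x Xx <-] <-]; exists x => //; by rewrite invgM !mulgA.
Qed.

Lemma conjset1 X : conjset (1 : G) X = X.
Proof.
apply/seteqP; split; first by move=> _ [x Xx <-]; rewrite invg1 mulg1 mul1g.
by move=> x Xx; exists x => //; rewrite invg1 mulg1 mul1g.
Qed.

Lemma lcoset_closed (H : set G) (k : G) :
  (forall x y, H x -> H y -> H (x * y)) -> (forall x, H x -> H x^-1) ->
  H k -> lcoset k H = H.
Proof.
move=> HM HV Hk; apply/seteqP; split; first by move=> _ [x Hx <-]; apply: HM.
by move=> x Hx; exists (k^-1 * x); [apply: HM => //; apply: HV|rewrite mulVKg].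
Qed.

Lemma normalizerM (C : set G) x y : normalizer C x -> normalizer C y ->
  normalizer C (x * y).
Proof. by rewrite /normalizer /= => Nx Ny; rewrite conjsetM Ny Nx. Qed.

Lemma normalizerV (C : set G) x : normalizer C x -> normalizer C x^-1.
Proof.
rewrite /normalizer /= => Nx; by rewrite -{1}Nx -conjsetM mulVg conjset1.
Qed.

Lemma sub_normalizer (C : set G) : is_subgroup C -> C `<=` normalizer C.
Proof.
rewrite /is_subgroup; case=> C1 CM CV c Cc; rewrite /normalizer /=; apply/seteqP; split.
  by move=> _ [x Cx <-]; apply: (CM); [apply: (CM)|apply: (CV)].
move=> x Cx; exists (c^-1 * x * c); first by apply: (CM) => //; apply: (CM) => //; apply: (CV).
by rewrite !mulgA mulgV mul1g mulgK.
Qed.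

Lemma conj_pow (k x : G) n : k * x ^+ n * k^-1 = (k * x * k^-1) ^+ n.
Proof.
have e y : k * y * k^-1 = y ^ k^-1 by rewrite conjgE invgK mulgA.
by rewrite !e conjXg.
Qed.

Lemma conj_in_norm (C : set G) c0 p : prime p -> c0 ^+ p = 1 ->
  C = [set c0 ^+ n | n in [set: nat]] -> forall c k, C c -> c <> 1 ->
  C (k^-1 * c * k) -> normalizer C k.
Proof.
move=> pp c0p eC c k Cc c1 Cd.
have d1 : k^-1 * c * k <> 1.
  by move=> d1; apply: c1; apply: (@mulgI _ k^-1); apply: (@mulIg _ k); rewrite d1 mulg1 mulVg.
have eCc := gen_nonid pp c0p (eq_ind _ (fun X => X c) Cc _ eC) c1.
have eCd := gen_nonid pp c0p (eq_ind _ (fun X => X (k^-1 * c * k)) Cd _ eC) d1.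
rewrite /normalizer /= eC {1}eCd eCc; apply/seteqP; split.
  move=> _ [_ [n _ <-] <-]; exists n => //; rewrite conj_pow.
  by rewrite !mulgA mulgV mul1g mulgK.
move=> _ [n _ <-]; exists ((k^-1 * c * k) ^+ n); first by exists n.
by rewrite conj_pow !mulgA mulgV mul1g mulgK.
Qed.

Lemma nonfixed_infinite (C : set G) c0 p (h : G) : is_subgroup C -> prime p ->
  c0 ^+ p = 1 -> C = [set c0 ^+ n | n in [set: nat]] -> h <> 1 ->
  infinite_set (left_cosets (normalizer C)) ->
  infinite_set [set a : coset_space C | coset_shift h a <> a].
Proof.
move=> Csub pp c0p eC h1 infN finS.
have Nsub := sub_normalizer Csub.
have lcN k : normalizer C k -> lcoset k (normalizer C) = normalizer C.
  move=> Nk; apply: lcoset_closed => //; [exact: normalizerM|exact: normalizerV].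
case: (Csub) => C1 CM CV.
pose T := [set f : G | ~ C (f^-1 * h * f)].
pose psi (a : coset_space C) := lcoset (projT1 (cid (proj2_sig a))) (normalizer C).
have step1 : (fun f => lcoset f (normalizer C)) @` T `<=`
    psi @` [set a : coset_space C | coset_shift h a <> a].
  move=> _ [f Tf <-].
  pose a : coset_space C := exist _ (lcoset f C) (ex_intro _ f erefl).
  exists a.
    move=> /(congr1 (@proj1_sig _ _)) /= e; apply: Tf.
    have : lcoset h (lcoset f C) (h * f) by exists f; [exists 1; rewrite ?mulg1|].
    by rewrite e => -[c Cc hf]; rewrite -mulgA -hf mulKg.
  rewrite /psi; case: (cid (proj2_sig a)) => r /= er.
  have : lcoset r C r by exists 1; rewrite ?mulg1.
  rewrite -er => -[c Cc <-]; rewrite lcosetM lcN //; exact: Nsub.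
have finT : finite_set ((fun f => lcoset f (normalizer C)) @` T).
  by apply: (sub_finite_set step1); apply: finite_image.
have finT' : finite_set ((fun f => lcoset f (normalizer C)) @` (~` T)).
  have [[f0 Tf0]|] := pselect (exists f0, ~ T f0); last first.
    move=> noT; apply: (sub_finite_set _ (finite_set0 _)) => x [f Tf e].
    by apply: noT; exists f.
  apply: (sub_finite_set _ (finite_set1 (lcoset f0 (normalizer C)))) => _ [f Tf <-].
  move: Tf0 Tf; rewrite /T /= => /contrapT Cf0 /contrapT Cf.
  have c1 : f0^-1 * h * f0 <> 1.
    move=> e; apply: h1; apply: (@mulgI _ f0^-1); apply: (@mulIg _ f0).
    by rewrite e mulg1 mulVg.
  have Nk := conj_in_norm pp c0p eC Cf0 c1 (k := f0^-1 * f).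
  have -> : f = f0 * (f0^-1 * f) by rewrite mulVKg.
  rewrite lcosetM lcN //; apply: Nk.
  by rewrite invgM invgK !mulgA !mulgK.
case: infN; have finU : finite_set (((fun f => lcoset f (normalizer C)) @` T) `|` ((fun f => lcoset f (normalizer C)) @` (~` T))) by rewrite finite_setU.
apply: (sub_finite_set _ finU).
move=> _ [f ->]; case: (pselect (T f)) => Tf; [left|right]; by exists f.
Qed.
End GroupPart.


Lemma pairs_exist (I : Type) (sigma : I -> I) (S : set I) : injective sigma ->
  infinite_set S -> (forall s, S s -> sigma s <> s) -> forall n,
  exists a : nat -> I, forall i j, (i < n)%N -> (j < n)%N ->
    (a i = a j -> i = j) /\ a i <> sigma (a j).
Proof.
move=> sinj Sinf Sfix; elim=> [|n [a Ha]].
  by have [s0 _] := infinite_setN0 Sinf; exists (fun=> s0).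
pose F := a @` `I_n `|` sigma @` (a @` `I_n).
have finF : finite_set F by rewrite /F finite_setU; split; [apply: finite_image|apply: finite_image; apply: finite_image]; apply: finite_II.
have finB : finite_set (F `|` sigma @^-1` F).
  rewrite finite_setU; split => //; apply: finite_preimage => //.
  by move=> x y _ _; apply: sinj.
have [s [Ss Bs]] := infinite_setN0 (infinite_setD Sinf finB).
have sF : ~ F s by move=> ?; apply: Bs; left.
have ssF : ~ F (sigma s) by move=> Fs; apply: Bs; exact: (or_intror Fs).
exists (fun k => if k == n then s else a k) => i j.
rewrite !ltnS [(i <= n)%N]leq_eqVlt [(j <= n)%N]leq_eqVlt => /orP[/eqP ->|i_n] /orP[/eqP ->|j_n]; rewrite ?eqxx.
- by split => //; apply/nesym/Sfix.
- rewrite (ltn_eqF j_n); split.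
    by move=> e; exfalso; apply: sF; left; exists j.
  by move=> e; apply: sF; right; rewrite e; exists (a j) => //; exists j.
- rewrite (ltn_eqF i_n); split.
    by move=> e; exfalso; apply: sF; left; exists i.
  by move=> e; apply: ssF; left; rewrite -e; exists i.
- by rewrite (ltn_eqF i_n) (ltn_eqF j_n); apply: Ha.
Qed.

Local Open Scope ring_scope.

Section Meas.
Variables (R : realType) (d : measure_display) (K : measurableType d).
Variables (kappa : probability K R) (I : Type).
Variable P : probability (prod_space I K) R.
Hypothesis P_product : is_product_measure kappa P.

Definition cyl (i : I) (A : set K) : set (prod_space I K) := [set x | A (x i)].
Definition rect m (j : 'I_m -> I) (B : 'I_m -> set K) : set (prod_space I K) :=
  [set x | forall k, B k (x (j k))].

Lemma cyl_meas i A : measurable A -> measurable (cyl i A).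
Proof. by move=> mA; apply: sub_sigma_algebra; exists i, A. Qed.

Lemma rect_meas m (j : 'I_m -> I) B : (forall k, measurable (B k)) ->
  measurable (rect j B).
Proof.
move=> mB; have -> : rect j B = \bigcap_(k in [set: 'I_m]) cyl (j k) (B k).
  by apply/seteqP; split => x /= H k; [move=> _|]; apply: H.
by apply: fin_bigcap_measurable; [exact: finite_finset|move=> k _; apply: cyl_meas].
Qed.

Definition ext T m (j : 'I_m -> T) (i : T) : 'I_m.+1 -> T :=
  fun k => if unlift ord0 k is Some k' then j k' else i.

Lemma ext0 T m (j : 'I_m -> T) i : ext j i ord0 = i.
Proof. by rewrite /ext unlift_none. Qed.

Lemma extS T m (j : 'I_m -> T) i k : ext j i (lift ord0 k) = j k.
Proof. by rewrite /ext liftK. Qed.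

Lemma ext_inj m (j : 'I_m -> I) i : injective j -> (forall k, j k <> i) ->
  injective (ext j i).
Proof.
move=> ji ni k1 k2.
case: (unliftP ord0 k1) => [k1'|] ->; case: (unliftP ord0 k2) => [k2'|] ->;
  rewrite ?ext0 ?extS //.
- by move=> /ji ->.
- by move=> /ni.
- by move=> /esym /ni.
Qed.

Lemma rect_ext m (j : 'I_m -> I) B i A :
  rect (ext j i) (ext B A) = rect j B `&` cyl i A.
Proof.
apply/seteqP; split => x.
  by move=> H; split; [move=> k; have := H (lift ord0 k); rewrite !extS|have := H ord0; rewrite !ext0].
move=> [H1 H2] k; case: (unliftP ord0 k) => [k'|] ->; rewrite ?ext0 ?extS //.
Qed.

Lemma P_rect m (j : 'I_m -> I) B : injective j -> (forall k, measurable (B k)) ->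
  P (rect j B) = (\prod_(k < m) kappa (B k))%E.
Proof. exact: P_product. Qed.

Lemma P_ext m (j : 'I_m -> I) B i A : injective j -> (forall k, measurable (B k)) ->
  (forall k, j k <> i) -> measurable A ->
  P (rect j B `&` cyl i A) = (P (rect j B) * kappa A)%E.
Proof.
move=> ji mB ni mA; rewrite -rect_ext P_rect //; last first.
  by move=> k; case: (unliftP ord0 k) => [k'|] ->; rewrite ?ext0 ?extS.
  by apply: ext_inj.
rewrite big_ord_recl ext0 P_rect // muleC; congr (_ * _)%E.
by apply: eq_bigr => k _; rewrite extS.
Qed.

Lemma prob_fin d' (T : measurableType d') (Q : probability T R) X : measurable X ->
  Q X = (fine (Q X))%:E.
Proof.
move=> mX; rewrite fineK // ge0_fin_numE //.
by apply: (le_lt_trans (probability_le1 Q mX)); apply: ltry.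
Qed.

Lemma ext_meas m (B : 'I_m -> set K) A : (forall k, measurable (B k)) -> measurable A ->
  forall k, measurable (ext B A k).
Proof. by move=> mB mA k; case: (unliftP ord0 k) => [k'|] ->; rewrite ?ext0 ?extS. Qed.

Lemma ext_avoid m (j : 'I_m -> I) i (z : I) : (forall k, j k <> z) -> i <> z ->
  forall k, ext j i k <> z.
Proof. by move=> jz iz k; case: (unliftP ord0 k) => [k'|] ->; rewrite ?ext0 ?extS. Qed.

Lemma P_ext2 m (j : 'I_m -> I) B i1 i2 A1 A2 : injective j ->
  (forall k, measurable (B k)) -> (forall k, j k <> i1) -> (forall k, j k <> i2) ->
  i1 <> i2 -> measurable A1 -> measurable A2 ->
  P (rect (ext (ext j i1) i2) (ext (ext B A1) A2)) = (P (rect j B) * kappa A1 * kappa A2)%E.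
Proof.
move=> ji mB n1 n2 i12 mA1 mA2.
rewrite rect_ext P_ext //; first by rewrite rect_ext P_ext.
- exact: ext_inj.
- exact: ext_meas.
- exact: ext_avoid.
Qed.

Section Pairs.
Variables (a b : nat -> I) (A : set K).
Hypothesis mA : measurable A.

Definition E n : set (prod_space I K) :=
  [set x | forall i, (i < n)%N -> (A (x (a i)) <-> A (x (b i)))].

Lemma E_meas n : measurable (E n).
Proof.
have -> : E n = \bigcap_(i in `I_n) ((cyl (a i) A `&` cyl (b i) A) `|`
                                 (cyl (a i) (~` A) `&` cyl (b i) (~` A))).
  apply/seteqP; split => x /= H i /H.
    rewrite /cyl /=; case: (pselect (A (x (a i)))) => Ha [h1 h2].
      by left; split => //; apply: h1.
    by right; split => // Hb; apply: Ha; apply: h2.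
  by rewrite /cyl /= => -[[? ?]|[? ?]].
apply: fin_bigcap_measurable; first exact: finite_II.
move=> i _; apply: measurableU; apply: measurableI; apply: cyl_meas => //;
  exact: measurableC.
Qed.

Definition Hd n := forall i i', (i < n)%N -> (i' < n)%N ->
  [/\ a i = a i' -> i = i', b i = b i' -> i = i' & a i <> b i'].

Let p := fine (kappa A).
Let r := p * p + (1 - p) * (1 - p).

Lemma E_rect n : Hd n -> forall m (j : 'I_m -> I) B, injective j ->
  (forall k, measurable (B k)) ->
  (forall k i, (i < n)%N -> j k <> a i /\ j k <> b i) ->
  P (E n `&` rect j B) = ((r ^+ n)%:E * P (rect j B))%E.
Proof.
have kA : kappa A = p%:E by apply: prob_fin.
have kAc : kappa (~` A) = (1 - p)%:E by rewrite probability_setC // kA EFinB.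
elim: n => [|n IH] Hn m j B ji mB av.
  have -> : E 0 = setT by apply/seteqP; split => // x _ i.
  by rewrite setTI expr0 mul1e.
have Hn' : Hd n by move=> i i' ii i'i; apply: Hn; apply: ltnW.
have [_ _ abn] := Hn n n (ltnSn n) (ltnSn n).
have jan k : j k <> a n by case: (av k n (ltnSn n)).
have jbn k : j k <> b n by case: (av k n (ltnSn n)).
pose j1 := ext (ext j (a n)) (b n).
have j1inj : injective j1.
  apply: ext_inj; first exact: ext_inj.
  by apply: ext_avoid.
have j1av k i : (i < n)%N -> j1 k <> a i /\ j1 k <> b i.
  move=> ilt; have [ai _ abi] := Hn i n (ltnW ilt) (ltnSn n).
  have [_ bi bai] := Hn n i (ltnSn n) (ltnW ilt).
  have ne : i <> n by move=> e; rewrite e ltnn in ilt.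
  have jai k' : j k' <> a i by case: (av k' i (ltnW ilt)).
  have jbi k' : j k' <> b i by case: (av k' i (ltnW ilt)).
  split; apply: ext_avoid; try apply: ext_avoid => //.
  - by move=> /esym/ai.
  - by move=> /esym.
  - by move=> /bi /esym.
pose B1 := ext (ext B A) A.
pose B2 := ext (ext B (~` A)) (~` A).
have mB1 : forall k, measurable (B1 k) by apply: ext_meas => //; apply: ext_meas.
have mAc : measurable (~` A) by apply: measurableC.
have mB2 : forall k, measurable (B2 k) by apply: ext_meas => //; apply: ext_meas.
have eU : E n.+1 `&` rect j B = (E n `&` rect j1 B1) `|` (E n `&` rect j1 B2).
  rewrite /j1 /B1 /B2 !rect_ext; apply/seteqP; split => x.
    move=> [HE HR]; have HE' : E n x by move=> i ilt; apply: HE; apply: ltnW.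
    have [h1 h2] := HE n (ltnSn n).
    case: (pselect (A (x (a n)))) => Ha; [left|right]; do ?split => //.
    - exact: h1.
    - by move=> Hb; apply: Ha; apply: h2.
  move=> [] [HE [[HR H1] H2]]; split => // i; rewrite ltnS leq_eqVlt => /orP[/eqP -> //|]; try exact: HE.
rewrite eU measureU; first last.
- rewrite /j1 /B1 /B2 !rect_ext; apply/seteqP; split => // x.
  by move=> [[_ [[_ H1] _]] [_ [[_ H2] _]]].
- by apply: measurableI; [apply: E_meas|apply: rect_meas].
- by apply: measurableI; [apply: E_meas|apply: rect_meas].
transitivity ((r ^+ n)%:E * P (rect j1 B1) + (r ^+ n)%:E * P (rect j1 B2))%E.
  by congr (_ + _)%E; apply: IH.
rewrite !P_ext2 // kA kAc (prob_fin P (rect_meas j mB)).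
rewrite -!EFinM -EFinD; congr EFin; rewrite exprS /r; ring.
Qed.
End Pairs.
End Meas.


Section SB.
Variable R : realType.

Definition J (n : nat) (z : int) : set R :=
  `[(z%:~R / 2 ^+ n), ((z + 1)%:~R / 2 ^+ n)[%classic.

Lemma J_mem n z t : J n z t <-> (z%:~R <= t * 2 ^+ n /\ t * 2 ^+ n < (z + 1)%:~R).
Proof.
have h : (0 : R) < 2 ^+ n by apply: exprn_gt0.
rewrite /J /= in_itv /= ler_pdivrMr // ltr_pdivlMr //.
by split => [/andP[]|[-> ->]].
Qed.

Lemma J_meas n z : measurable (J n z).
Proof. exact: measurable_itv. Qed.

Lemma J_cover n t : J n (Num.floor (t * 2 ^+ n)) t.
Proof. by apply/J_mem; have /andP[] := floor_itv (t * 2 ^+ n). Qed.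

Lemma J_close n z x y : J n z x -> J n z y -> `|x - y| <= (2^-1) ^+ n.
Proof.
move=> /J_mem [x1 x2] /J_mem [y1 y2].
have h : (0 : R) < 2 ^+ n by apply: exprn_gt0.
have e : (2^-1 : R) ^+ n = (2 ^+ n)^-1 by rewrite exprVn.
rewrite e -[X in _ <= X]mul1r ler_pdivlMr //.
rewrite -[X in _ * X](gtr0_norm h) -normrM mulrBl ler_norml.
move: x2 y2; rewrite intrD /= => x2 y2.
apply/andP; split; lra.
Qed.

Lemma geo_le0 (q r : R) : 0 <= r -> r < 1 -> (forall n, q <= r ^+ n) -> q <= 0.
Proof.
move=> r0 r1 H.
have := @cvg_expr R r; rewrite ger0_norm // => /(_ r1) cv.
apply: (cvgr_to_ge cv); exact: nearW.
Qed.

Lemma exists_mid d (K : measurableType d) (kappa : probability K R) :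
  standard_borel R K -> nontrivial_prob kappa ->
  exists A, measurable A /\ kappa A <> 0%E /\ kappa A <> 1%E.
Proof.
move=> [B [f [h [_ mf _ [_ hf _]]]]] nt.
apply: contrapT => H.
have H01 A : measurable A -> kappa A = 0%E \/ kappa A = 1%E.
  move=> mA; case: (pselect (kappa A = 0%E)) => [|h0]; first by left.
  case: (pselect (kappa A = 1%E)) => [|h1]; first by right.
  by exfalso; apply: H; exists A.
have finj : injective f := can_inj hf.
pose D n z := f @^-1` J n z.
have mD n z : measurable (D n z).
  by have := mf measurableT _ (J_meas n z); rewrite setTI.
have negl n z : kappa (D n z) <> 1%E -> kappa.-negligible (D n z).
  move=> ne; exists (D n z); split => //.
  by case: (H01 _ (mD n z)).
have ex1 n : exists z, kappa (D n z) = 1%E.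
  apply: contrapT => nz.
  have nz' z : kappa (D n z) <> 1%E by move=> e; apply: nz; exists z.
  have : kappa.-negligible (\bigcup_k (D n (Posz k) `|` D n (Negz k))).
    by apply: negligible_bigcup => k; apply: negligibleU; apply: negl.
  move=> [N [mN N0 sN]].
  have : (kappa setT <= kappa N)%E.
    apply: le_measure; rewrite ?inE //.
    move=> t _; apply: sN; case E: (Num.floor (f t * 2 ^+ n)) => [k|k];
      exists k => //; [left|right]; rewrite /D /= -E; exact: J_cover.
  by rewrite probability_setT N0 lee_fin ler10.
have [z zP] := choice ex1.
pose X := \bigcap_n D n (z n).
have mX : measurable X by apply: bigcapT_measurable => n; apply: mD.
have nX : kappa.-negligible (~` X).
  rewrite /X setC_bigcap; apply: negligible_bigcup => n.
  exists (~` D n (z n)); split => //; first exact: measurableC.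
  have e := probability_setC kappa (mD n (z n)); apply: (etrans e); by rewrite zP subee.
have kX : kappa X = 1%E.
  move: nX => [N [mN N0 sN]].
  have : (kappa (~` X) <= 0)%E by rewrite -N0; apply: le_measure; rewrite ?inE //; exact: measurableC.
  have cX := probability_setC kappa mX.
  rewrite cX sube_le0 => le1.
  by apply/eqP; rewrite eq_le le1 probability_le1.
have [x Xx] : X !=set0.
  apply/set0P/eqP => X0; move: kX; rewrite X0 measure0 => /eqP; rewrite eq_sym onee_eq0 //.

apply: nt; exists x; rewrite -kX; congr (kappa _).
apply/seteqP; split => y; first by move=> ->.
move=> Xy; apply/esym/finj; apply/eqP; rewrite -subr_eq0 -normr_le0.
apply: (@geo_le0 _ (2^-1)) => //; first lra.
by move=> n; apply: (J_close (Xx n I) (Xy n I)).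
Qed.
End SB.


Local Close Scope ring_scope.
Unset Implicit Arguments.

Theorem lemma5p1 (G : groupType) (C : set G)
  (G_countable : countable [set: G]) (G_infinite : infinite_set [set: G])
  (C_subgroup : is_subgroup C)
  (C_cyclic : exists c : G, C = [set (c ^+ n)%g | n in [set: nat]])
  (C_prime : exists p : nat, prime p /\ (C #= `I_p)%card)
  (R : realType) (d : measure_display) (K : measurableType d)
  (kappa : probability K R)
  (K_standard : standard_borel R K) (kappa_nontrivial : nontrivial_prob kappa)
  (P : probability (prod_space (coset_space C) K) R)
  (P_product : is_product_measure kappa P)
  (index_infinite : infinite_set (left_cosets (normalizer C))) :
  forall g : G, g <> 1%g ->
    P.-negligible [set x | bshift g x = x].
Proof.
move=> g g1.
case: C_cyclic => c0 eC; case: C_prime => p [pp Cp].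
have c0p : (c0 ^+ p = 1)%g by apply: expg_card; rewrite -eC.
have h1 : (g^-1 <> 1)%g by move=> e; apply: g1; rewrite -[g]invgK e invg1.
have Sinf := nonfixed_infinite C_subgroup pp c0p eC h1 index_infinite.
pose sigma := @coset_shift G C g^-1.
have sinj : injective sigma.
  move=> [X HX] [Y HY] /(congr1 (@proj1_sig _ _)) /= e.
  apply: eq_exist.
  by rewrite -[X]lcoset1 -[Y]lcoset1 -(mulgV g) !lcosetM e.
have Sfix : forall s, [set a | coset_shift g^-1 a <> a] s -> sigma s <> s.
  by move=> s.
have pairs := pairs_exist sinj Sinf Sfix.
have [A [mA [kA0 kA1]]] := exists_mid K_standard kappa_nontrivial.
have [a aP] := choice pairs.
pose q := fine (kappa A).
have kAq : kappa A = q%:E := prob_fin kappa mA.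
have q0 : (0 < q)%R.
  rewrite lt_neqAle fine_ge0 ?measure_ge0 // andbT eq_sym; apply/eqP => e.
  by apply: kA0; rewrite kAq e.
have q1 : (q < 1)%R.
  have := probability_le1 kappa mA; rewrite kAq lee_fin le_eqVlt => /orP[/eqP e|//].
  by exfalso; apply: kA1; rewrite kAq e.
pose r := (q * q + (1 - q) * (1 - q))%R.
have r0 : (0 <= r)%R by rewrite /r; nra.
have r1 : (r < 1)%R by rewrite /r; nra.
pose En n := E (a n) (sigma \o a n) A n.
have HdE n : Hd (a n) (sigma \o a n) n.
  move=> i i' ii i'i; have [e1 e2] := aP n i i' ii i'i.
  by split => //= /sinj.
have PE n : P (En n) = (r ^+ n)%:E.
  have := @E_rect R d K kappa _ P P_product (a n) (sigma \o a n) A mA n (HdE n) 0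
    (fun _ => a n 0) (fun _ => [set: K]).
  have -> : rect (fun _ : 'I_0 => a n 0) (fun _ => [set: K]) = [set: prod_space (coset_space C) K].
    by apply/seteqP; split => // x _ [].
  rewrite setIT probability_setT mule1; apply.
  - by move=> [].
  - by move=> _; exact: measurableT.
  - by move=> [].
exists (\bigcap_n En n); split.
- by apply: bigcapT_measurable => n; apply: E_meas.
- have mB : measurable (\bigcap_n En n) by apply: bigcapT_measurable => n; apply: E_meas.
  rewrite (prob_fin P mB); congr EFin; apply/eqP; rewrite eq_le fine_ge0 ?measure_ge0 // andbT.
  apply: (geo_le0 r0 r1) => n; rewrite -lee_fin -(prob_fin P mB) -PE.
  by apply: le_measure; rewrite ?inE //; [apply: E_meas| apply: bigcap_inf].
- move=> x /= Hx n _ i ilt /=.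
  have -> : x (sigma (a n i)) = x (a n i) by rewrite -[in RHS]Hx.
  by [].
Qed.
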